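(* Let $A$ and $B$ be strongly regular graphs with the same parameters $(n,d,\lambda,\mu)$ (possibly $A\cong B$). Let $A'$ and $B'$ be partially colored versions in which the colored vertices are $a_1,\dots,a_m\in V(A)$ and $b_1,\dots,b_m\in V(B)$, with $a_i$ and $b_i$ both colored $i$, each color $1,\dots,m$ occurring exactly once in each graph and all other vertices uncolored. Let $G=G(A',B')$ and $H=G(A',A')$ (the latter built from two vertex-disjoint copies of $A'$). (1) If $\mathrm{WL}_1(A')\ne\mathrm{WL}_1(B')$, then $\mathrm{WL}_1(G)\ne\mathrm{WL}_1(H)$. (2) If for some $r\ge1$ the multisets of 1-WL colors after $r$ rounds coincide, $\{\!\{C^r_{A'}(x)\}\!\}_{x\in V(A)}=\{\!\{C^r_{B'}(x)\}\!\}_{x\in V(B)}$, then $\omega^{(r-1)}(G)=\omega^{(r-1)}(H)$.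
   Context: Graphs are finite, simple and undirected. A strongly regular graph with parameters $(n,d,\lambda,\mu)$ is an $n$-vertex $d$-regular graph in which any two adjacent vertices have $\lambda$ common neighbours and any two distinct non-adjacent vertices have $\mu$ common neighbours. Construction $G(A',B')$ (uncolored graph): take the vertex-disjoint union of $A$ and $B$; for each $i=1,\dots,m$ add a new connecting vertex $c_i$ adjacent to $a_i$ and $b_i$, and $i$ new pendant vertices $p_{i,1},\dots,p_{i,i}$, each of degree $1$ and adjacent only to $c_i$. All colors are discarded. Color refinement (1-WL) on a vertex-colored graph $X$ with $N$ vertices: $C^0_X(x)$ is the color of $x$ (a common default color for uncolored vertices), $C^{r+1}_X(x)=\big(C^r_X(x),\{\!\{C^r_X(y)\}\!\}_{y\in N(x)}\big)$, with $\{\!\{\cdot\}\!\}$ a multiset; $\mathrm{WL}_1(X)=\{\!\{C^N_X(x)\}\!\}_{x\in V(X)}$. Let $w_k(x,y)$ be the number of walks of length $k$ from $x$ to $y$ in an $N$-vertex graph and $w_*(x,y)=(w_0(x,y),\dots,w_{N-1}(x,y))$. Define $\omega_0(x)=w_*(x,x)$, $\omega_{r+1}(x)=\big(\omega_r(x),\{\!\{(w_*(x,y),\omega_r(y))\}\!\}_{y}\big)$ and $\omega^{(r)}(G)=\{\!\{\omega_r(x)\}\!\}_{x\in V(G)}$. *)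

(* Defs.v *)
From HB Require Import structures.
From mathcomp Require Import all_boot.
From mathcomp Require Export boolp.

Set Implicit Arguments.
Unset Strict Implicit.
Unset Printing Implicit Defensive.

Definition simple_graph (T : finType) (e : rel T) : Prop :=
  symmetric e /\ irreflexive e.

Definition srg (T : finType) (e : rel T) (n d lam mu : nat) : Prop :=
  [/\ simple_graph e, #|T| = n,
      (forall x, #|[set y | e x y]| = d),
      (forall x y, x != y -> e x y -> #|[set z | e x z && e y z]| = lam)
    & (forall x y, x != y -> ~~ e x y -> #|[set z | e x z && e y z]| = mu)].

(* Colours after r rounds; a multiset over a type K is a counting function
   K -> nat.  Initial colours are option nat (None = uncoloured). *)
Fixpoint wlcol (r : nat) : Type :=
  match r with
  | 0 => option nat
  | r'.+1 => (wlcol r' * (wlcol r' -> nat))%type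
  end.

Fixpoint wlC (T : finType) (e : rel T) (c : T -> option nat) (r : nat)
  {struct r} : T -> wlcol r :=
  match r return T -> wlcol r with
  | 0 => c
  | r'.+1 => fun x =>
      (wlC e c r' x, fun k => #|[set y | e x y && `[< wlC e c r' y = k >]]|)
  end.

Definition wlms (T : finType) (e : rel T) (c : T -> option nat) (r : nat)
  : wlcol r -> nat :=
  fun k => #|[set x | `[< wlC e c r x = k >]]|.

Arguments wlms {T} e c r _.

Definition WL1 (T : finType) (e : rel T) (c : T -> option nat)
  : {N : nat & wlcol N -> nat} :=
  existT (fun N => wlcol N -> nat) #|T| (wlms e c #|T|).

Fixpoint walks (T : finType) (e : rel T) (k : nat) (x y : T) {struct k} : nat :=
  match k with
  | 0 => nat_of_bool (x == y)
  | k'.+1 => \sum_(z | e x z) walks e k' z y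
  end.

Definition wstar (T : finType) (e : rel T) (x y : T) : seq nat :=
  [seq walks e k x y | k <- iota 0 #|T|].

Fixpoint omty (r : nat) : Type :=
  match r with
  | 0 => seq nat
  | r'.+1 => (omty r' * ((seq nat * omty r') -> nat))%type
  end.

Fixpoint omega (T : finType) (e : rel T) (r : nat) {struct r} : T -> omty r :=
  match r return T -> omty r with
  | 0 => fun x => wstar e x x
  | r'.+1 => fun x =>
      (omega e r' x,
       fun p => #|[set y | `[< (wstar e x y, omega e r' y) = p >]]|)
  end.

Definition omegams (T : finType) (e : rel T) (r : nat) : omty r -> nat :=
  fun o => #|[set x | `[< omega e r x = o >]]|.
Arguments omegams {T} e r _.

(* A' : vertex a_i (i = 1..m, here i : 'I_m stands for i+1) coloured i,
   all other vertices uncoloured (None). *)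
Definition pcol (T : finType) (m : nat) (a : 'I_m -> T) : T -> option nat :=
  fun x => omap (fun i : 'I_m => (nat_of_ord i).+1) [pick i | a i == x].

Definition nocol (T : finType) : T -> option nat := fun _ => None.

(* Vertices of G(A',B'): V(A) + V(B) + connectors c_i + pendants p_{i,j}
   (connector i : 'I_m is c_{i+1}, which has i+1 pendants). *)
Notation gvert TA TB m :=
  ((TA + TB) + ('I_m + {i : 'I_m & 'I_(nat_of_ord i).+1}))%type.

Definition gadj (TA TB : finType) (m : nat) (eA : rel TA) (eB : rel TB)
  (a : 'I_m -> TA) (b : 'I_m -> TB) : rel (gvert TA TB m) :=
  fun u v =>
  match u, v with
  | inl (inl x), inl (inl y) => eA x y
  | inl (inr x), inl (inr y) => eB x y
  | inl (inl x), inr (inl i) => x == a i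
  | inr (inl i), inl (inl x) => x == a i
  | inl (inr x), inr (inl i) => x == b i
  | inr (inl i), inl (inr x) => x == b i
  | inr (inl i), inr (inr p) => tag p == i
  | inr (inr p), inr (inl i) => tag p == i
  | _, _ => false
  end.

(* Main.v *)
Require Import Defs.
From mathcomp Require Import all_boot.
From mathcomp Require Import boolp.
From mathcomp Require Import all_order all_algebra zify ring.
From Stdlib Require Import Eqdep_dec PeanoNat.
Set Implicit Arguments. Unset Strict Implicit. Unset Printing Implicit Defensive.

Notation PT m := {i : 'I_m & 'I_(nat_of_ord i).+1}.


Lemma mult_pred (T1 T2 : finType) (K : Type) (C1 : T1 -> K) (C2 : T2 -> K)
  (P1 : pred T1) (P2 : pred T2) :
  (forall k, #|[set z | P1 z && `[< C1 z = k >]]| = #|[set z | P2 z && `[< C2 z = k >]]|) ->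
  forall R : K -> bool,
  #|[set z | P1 z && R (C1 z)]| = #|[set z | P2 z && R (C2 z)]|.
Proof.
move=> H R.
move: {2}#|[set z | P1 z]| (leqnn #|[set z | P1 z]|) => n.
elim: n P1 P2 H => [|n IH] P1 P2 H Hn.
- have E1 : forall z, P1 z = false.
    move=> z; apply/negbTE/negP=> Pz.
    have : 0 < #|[set z | P1 z]| by apply/card_gt0P; exists z; rewrite inE.
    by move/leq_trans/(_ Hn).
  have E2 : forall w, P2 w = false.
    move=> w; apply/negbTE/negP=> Pw.
    have := H (C2 w).
    have -> : [set z | P1 z && `[< C1 z = C2 w >]] = set0.
      by apply/setP=> z; rewrite !inE E1.
    rewrite cards0 => /esym/eqP; rewrite cards_eq0 => /eqP/setP/(_ w).
    by rewrite !inE Pw /=; case: (asboolP (C2 w = C2 w)).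
  have -> : [set z | P1 z && R (C1 z)] = set0 by apply/setP=> z; rewrite !inE E1.
  have -> : [set z | P2 z && R (C2 z)] = set0 by apply/setP=> z; rewrite !inE E2.
  by rewrite !cards0.
- case: (pickP P1) => [z0 Pz0|N1]; last first.
    apply: (IH P1 P2 H); have -> : [set z | P1 z] = set0 by apply/setP=> z; rewrite !inE N1.
    by rewrite cards0.
  set k0 := C1 z0.
  pose P1' := fun z => P1 z && ~~ `[< C1 z = k0 >].
  pose P2' := fun z => P2 z && ~~ `[< C2 z = k0 >].
  have H' : forall k, #|[set z | P1' z && `[< C1 z = k >]]| = #|[set z | P2' z && `[< C2 z = k >]]|.
    move=> k; case: (asboolP (k = k0)) => [->|nk].
      have -> : [set z | P1' z && `[< C1 z = k0 >]] = set0.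
        by apply/setP=> z; rewrite !inE /P1'; case: (asboolP (C1 z = k0)); rewrite ?andbF.
      have -> : [set z | P2' z && `[< C2 z = k0 >]] = set0.
        by apply/setP=> z; rewrite !inE /P2'; case: (asboolP (C2 z = k0)); rewrite ?andbF.
      by rewrite !cards0.
    have -> : [set z | P1' z && `[< C1 z = k >]] = [set z | P1 z && `[< C1 z = k >]].
      apply/setP=> z; rewrite !inE /P1'; case: (asboolP (C1 z = k)) => [->|]; rewrite ?andbF //.
      by case: (asboolP (k = k0)) => //; rewrite andbT.
    have -> : [set z | P2' z && `[< C2 z = k >]] = [set z | P2 z && `[< C2 z = k >]].
      apply/setP=> z; rewrite !inE /P2'; case: (asboolP (C2 z = k)) => [->|]; rewrite ?andbF //.
      by case: (asboolP (k = k0)) => //; rewrite andbT.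
    exact: H.
  have Hn' : #|[set z | P1' z]| <= n.
    rewrite -ltnS; apply: leq_trans Hn; apply: proper_card; apply/properP; split.
      by apply/subsetP=> z; rewrite !inE /P1' => /andP[].
    exists z0; first by rewrite inE.
    by rewrite inE /P1' /k0; case: (asboolP (C1 z0 = C1 z0)) => //; rewrite andbF.
  have split1 : forall (T : finType) (C : T -> K) (P : pred T),
    #|[set z | P z && R (C z)]| =
    #|[set z | (P z && ~~ `[< C z = k0 >]) && R (C z)]| +
    (if R k0 then #|[set z | P z && `[< C z = k0 >]]| else 0).
    move=> T C P.
    rewrite -(cardsID [set z | `[< C z = k0 >]] [set z | P z && R (C z)]) addnC.
    congr (_ + _).
      by apply: eq_card=> z; rewrite !inE; case: (P z); case: (asboolP (C z = k0)) => //=; rewrite andbT.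
    case: (boolP (R k0)) => Rk.
      apply: eq_card=> z; rewrite !inE; case: (asboolP (C z = k0)) => [->|]; rewrite ?Rk ?andbT ?andbF //.
    apply/eqP; rewrite cards_eq0; apply/eqP/setP=> z; rewrite !inE.
    case: (asboolP (C z = k0)) => [->|]; rewrite ?andbF //.
    by rewrite (negbTE Rk) andbF.
  rewrite (split1 _ C1 P1) (split1 _ C2 P2).
  congr (_ + _); first exact: (IH P1' P2' H' Hn').
  by rewrite (H k0).
Qed.

Lemma mult_ex (T1 T2 : finType) (K : Type) (C1 : T1 -> K) (C2 : T2 -> K)
  (P1 : pred T1) (P2 : pred T2) :
  (forall k, #|[set z | P1 z && `[< C1 z = k >]]| = #|[set z | P2 z && `[< C2 z = k >]]|) ->
  forall z1, P1 z1 -> exists z2, P2 z2 /\ C2 z2 = C1 z1.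
Proof.
move=> H z1 P1z.
have : 0 < #|[set z | P2 z && `[< C2 z = C1 z1 >]]|.
  rewrite -H; apply/card_gt0P; exists z1; rewrite inE P1z /=; exact/asboolP.
case/card_gt0P=> z2; rewrite inE => /andP[P2z /asboolP E]; by exists z2.
Qed.

Lemma mult_map (T1 T2 : finType) (K Q : Type) (C1 : T1 -> K) (C2 : T2 -> K)
  (P1 : pred T1) (P2 : pred T2) (f1 : T1 -> Q) (f2 : T2 -> Q) :
  (forall k, #|[set z | P1 z && `[< C1 z = k >]]| = #|[set z | P2 z && `[< C2 z = k >]]|) ->
  (forall z1 z2, P1 z1 -> P2 z2 -> C1 z1 = C2 z2 -> f1 z1 = f2 z2) ->
  (forall z2 z2', P2 z2 -> P2 z2' -> C2 z2 = C2 z2' -> f2 z2 = f2 z2') ->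
  forall p, #|[set z | P1 z && `[< f1 z = p >]]| = #|[set z | P2 z && `[< f2 z = p >]]|.
Proof.
move=> H H12 H22 p.
pose R := fun k => `[< exists z2, P2 z2 /\ C2 z2 = k /\ f2 z2 = p >].
have -> : [set z | P1 z && `[< f1 z = p >]] = [set z | P1 z && R (C1 z)].
  apply/setP=> z; rewrite !inE; case: (boolP (P1 z)) => //= Pz.
  apply/asboolP/asboolP.
    move=> <-; have [z2 [P2z E]] := mult_ex H Pz; exists z2; split=> //; split=> //.
    by symmetry; apply: H12.
  by case=> z2 [P2z [E <-]]; apply: H12.
have -> : [set z | P2 z && `[< f2 z = p >]] = [set z | P2 z && R (C2 z)].
  apply/setP=> z; rewrite !inE; case: (boolP (P2 z)) => //= Pz.
  apply/asboolP/asboolP.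
    by move=> <-; exists z.
  by case=> z2 [P2z [E <-]]; apply: H22.
exact: mult_pred.
Qed.

Module RingPart.
Import GRing.Theory Num.Theory.
Local Open Scope ring_scope.



Record st (TA : finType) (m : nat) := St {
  sA : TA -> int; sC : 'I_m -> int; sP : PT m -> int;
  sal : int; sbe : 'I_m -> int; sga : 'I_m -> int; sde : int; sep : int }.

Section Step.
Variables (TA : finType) (eA : rel TA) (m : nat) (a : 'I_m -> TA).
Variables (d lam mu : nat) (padj : 'I_m -> 'I_m -> bool).
Variables (f0 : option (TA + ('I_m + PT m))) (veqj vadjj : 'I_m -> bool).

Definition vinb := f0 == None.

Definition Lev (s : st TA m) (zeq zadj : 'I_m -> bool) (ve va : bool) : int :=
  sal s + \sum_j sbe s j * (zeq j)%:R + \sum_j sga s j * (zadj j)%:R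
  + sde s * ve%:R + sep s * va%:R.

Definition Lx (s : st TA m) (i : 'I_m) : int :=
  Lev s (fun j => i == j) (padj i) (veqj i) (vadjj i).

Definition step (s : st TA m) : st TA m :=
  St (fun p => \sum_(p' | eA p p') sA s p' + \sum_(i | p == a i) sC s i)
     (fun i => sA s (a i) + Lx s i + \sum_(q : PT m | tag q == i) sP s q)
     (fun q => sC s (tag q))
     (sal s * d%:R + mu%:R * \sum_j sga s j + sep s * mu%:R * vinb%:R)
     (fun j => (d%:R - mu%:R) * sga s j + sC s j)
     (fun j => sbe s j + (lam%:R - mu%:R) * sga s j)
     (sep s * (d%:R - mu%:R))
     (sde s + sep s * (lam%:R - mu%:R)).

Definition s0 : st TA m :=
  St (fun p => (f0 == Some (inl p))%:R) (fun i => (f0 == Some (inr (inl i)))%:R)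
     (fun q => (f0 == Some (inr (inr q)))%:R) 0 (fun _ => 0) (fun _ => 0) vinb%:R 0.

Definition stk (k : nat) := iter k step s0.
End Step.


Lemma sum_bool (T : finType) (P b : pred T) :
  \sum_(i | P i) ((b i)%:R : int) = (#|[set i | P i && b i]|)%:R.
Proof.
rewrite -sum1_card natr_sum.
rewrite (eq_bigl (fun i => P i && b i)); last by move=> i; rewrite inE.
rewrite big_mkcondr /=; apply: eq_bigr => i _; by case: (b i).
Qed.

Lemma sum_delta (m : nat) (f : 'I_m -> int) (i : 'I_m) :
  \sum_j f j * (i == j)%:R = f i.
Proof.
rewrite (bigD1 i) //= eqxx mulr1 big1 ?addr0 // => j /negbTE.
by rewrite eq_sym => ->; rewrite mulr0.
Qed.

Lemma eq_inl (A B : eqType) (p q : A) : (inl p == inl q :> A + B) = (p == q).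
Proof. by []. Qed.
Lemma eq_inr (A B : eqType) (p q : B) : (inr p == inr q :> A + B) = (p == q).
Proof. by []. Qed.
Lemma eq_Some (A : eqType) (p q : A) : (Some p == Some q) = (p == q).
Proof. by []. Qed.

Lemma sum_mul0 (I : finType) (F : I -> int) : \sum_j 0 * F j = 0.
Proof. by rewrite big1 // => j _; rewrite mul0r. Qed.

Section Rep.
Variables (TA TX : finType) (eA : rel TA) (eX : rel TX) (m : nat).
Variables (a : 'I_m -> TA) (x : 'I_m -> TX) (d lam mu : nat).
Hypotheses (symX : symmetric eX) (irrX : irreflexive eX)
  (regX : forall z, #|[set y | eX z y]| = d)
  (lamX : forall z w, z != w -> eX z w -> #|[set y | eX z y && eX w y]| = lam)
  (muX : forall z w, z != w -> ~~ eX z w -> #|[set y | eX z y && eX w y]| = mu)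
  (injx : injective x).

Local Notation V := (gvert TA TX m).
Local Notation g := (gadj eA eX a x).

Lemma cnt1 z : \sum_(z' | eX z z') (1 : int) = d%:R.
Proof.
rewrite -(regX z) -sum1_card natr_sum; apply: eq_bigl => y; by rewrite inE.
Qed.

Lemma cnt_eq z w : \sum_(z' | eX z z') ((z' == w)%:R : int) = (eX z w)%:R.
Proof.
rewrite sum_bool; congr (_%:R).
case: (boolP (eX z w)) => H.
  have -> : [set i | eX z i & i == w] = [set w].
    by apply/setP=> y; rewrite !inE; case: eqP => [->|]; rewrite ?H ?andbF.
  by rewrite cards1.
apply/eqP; rewrite cards_eq0; apply/eqP/setP=> y; rewrite !inE.
by case: eqP => [->|]; rewrite ?(negbTE H) ?andbF.
Qed.

Lemma cnt_adj z w : \sum_(z' | eX z z') ((eX z' w)%:R : int) =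
  mu%:R + (d%:R - mu%:R) * (z == w)%:R + (lam%:R - mu%:R) * (eX z w)%:R.
Proof.
rewrite sum_bool.
have E : [set i | eX z i && eX i w] = [set y | eX z y && eX w y].
  by apply/setP=> y; rewrite !inE (symX y w).
rewrite E; case: (eqVneq z w) => [->|nzw].
  rewrite irrX /= mulr1 mulr0 addr0 addrC subrK; congr (_%:R).
  by rewrite -(regX w); apply: eq_card => y; rewrite !inE andbb.
case: (boolP (eX z w)) => H.
  by rewrite (lamX nzw H) mulr0 addr0 mulr1 addrC subrK.
by rewrite (muX nzw H) mulr0 mulr0 !addr0.
Qed.

Lemma sum_gvert (u : V) (F : V -> int) :
  \sum_(w | g u w) F w =
    \sum_(p | g u (inl (inl p))) F (inl (inl p)) + \sum_(z | g u (inl (inr z))) F (inl (inr z))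
  + \sum_(i | g u (inr (inl i))) F (inr (inl i)) + \sum_(q | g u (inr (inr q))) F (inr (inr q)).
Proof.
by rewrite big_sumType /= !big_sumType /= !addrA.
Qed.

Variable v : V.

Definition fixv : option (TA + ('I_m + PT m)) :=
  match v with inl (inl p) => Some (inl p) | inl (inr _) => None | inr w => Some (inr w) end.
Definition veq z := if v is inl (inr y) then z == y else false.
Definition vadj z := if v is inl (inr y) then eX z y else false.
Definition padjX i j := eX (x i) (x j).

Definition evalu (s : st TA m) (u : V) : int :=
  match u with
  | inl (inl p) => sA s p
  | inl (inr z) => Lev s (fun j => z == x j) (fun j => eX z (x j)) (veq z) (vadj z)
  | inr (inl i) => sC s i
  | inr (inr q) => sP s q
  end.

Local Notation stepX := (step eA a d lam mu padjX fixv (fun i => veq (x i)) (fun i => vadj (x i))).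

Lemma sumL (s : st TA m) z :
  \sum_(z' | eX z z') Lev s (fun j => z' == x j) (fun j => eX z' (x j)) (veq z') (vadj z') =
  sal s * d%:R + \sum_j sbe s j * (eX z (x j))%:R
  + \sum_j sga s j * (mu%:R + (d%:R - mu%:R) * (z == x j)%:R + (lam%:R - mu%:R) * (eX z (x j))%:R)
  + sde s * (vadj z)%:R
  + sep s * (mu%:R * (vinb fixv)%:R + (d%:R - mu%:R) * (veq z)%:R + (lam%:R - mu%:R) * (vadj z)%:R).
Proof.
rewrite /Lev !big_split /=; congr (_ + _ + _ + _ + _).
- by rewrite -(cnt1 z) mulr_sumr; apply: eq_bigr => *; rewrite mulr1.
- rewrite exchange_big /=; apply: eq_bigr => j _; by rewrite -mulr_sumr cnt_eq.
- rewrite exchange_big /=; apply: eq_bigr => j _; by rewrite -mulr_sumr cnt_adj.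
- rewrite -mulr_sumr; congr (_ * _); rewrite /veq /vadj /vinb /fixv; case: v => [[p|y]|w] /=;
    [by rewrite big1_eq | exact: cnt_eq | by rewrite big1_eq].
- rewrite -mulr_sumr; congr (_ * _); rewrite /veq /vadj /vinb /fixv; case: v => [[p|y]|w] /=;
    [by rewrite big1_eq !mulr0 !addr0 | rewrite mulr1; exact: cnt_adj | by rewrite big1_eq !mulr0 !addr0].
Qed.

Local Notation stkX := (stk eA a d lam mu padjX fixv (fun i => veq (x i)) (fun i => vadj (x i))).

Lemma rep0 u : ((walks g 0 u v)%:R : int) = evalu (stkX 0) u.
Proof.
rewrite /= /evalu /Lev /s0 /vinb /fixv /veq /vadj.
case: u => [[p|z]|[i|q]]; case: v => [[p'|z']|[i'|q']] /=;
  rewrite ?mul0r ?sum_mul0 ?mulr0 ?add0r ?addr0 ?mul0r ?mul1r //;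
  rewrite ?eq_inl ?eq_inr ?eq_Some ?eq_inl ?eq_inr ?eq_Some //; rewrite [in RHS]eq_sym //.
Qed.

Lemma repS k u : (forall w, ((walks g k w v)%:R : int) = evalu (stkX k) w) ->
  ((walks g k.+1 u v)%:R : int) = evalu (stkX k.+1) u.
Proof.
move=> IH.
change (stkX k.+1) with (stepX (stkX k)).
rewrite [walks _ _ _ _]/= natr_sum sum_gvert.
rewrite (eq_bigr (fun p => evalu (stkX k) (inl (inl p)))); last by move=> *; rewrite IH.
rewrite (eq_bigr (fun p => evalu (stkX k) (inl (inr p)))); last by move=> *; rewrite IH.
rewrite (eq_bigr (fun p => evalu (stkX k) (inr (inl p)))); last by move=> *; rewrite IH.
rewrite (eq_bigr (fun p => evalu (stkX k) (inr (inr p)))); last by move=> *; rewrite IH.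
set s := stkX k.
case: u => [[p|z]|[i|q]] /=.
- by rewrite !big_pred0_eq !addr0.
- rewrite !big_pred0_eq add0r addr0 sumL.
  have -> : \sum_(i < m | z == x i) sC s i = \sum_i sC s i * (z == x i)%:R.
    rewrite big_mkcond /=; apply: eq_bigr => i _; by case: (z == x i); rewrite ?mulr1 ?mulr0.
  rewrite /Lev /step /=.
  set e := fun j => ((z == x j)%:R : int).
  set ad := fun j => ((eX z (x j))%:R : int).
  rewrite -/(e _) -/(ad _).
  have E1 : \sum_j ((d%:R - mu%:R) * sga s j + sC s j) * e j =
     (d%:R - mu%:R) * \sum_j sga s j * e j + \sum_j sC s j * e j.
    by rewrite mulr_sumr -big_split; apply: eq_bigr => j _ /=; ring.
  have E2 : \sum_j (sbe s j + (lam%:R - mu%:R) * sga s j) * ad j =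
     \sum_j sbe s j * ad j + (lam%:R - mu%:R) * \sum_j sga s j * ad j.
    by rewrite mulr_sumr -big_split; apply: eq_bigr => j _ /=; ring.
  have E3 : \sum_j sga s j * (mu%:R + (d%:R - mu%:R) * e j + (lam%:R - mu%:R) * ad j) =
     mu%:R * \sum_j sga s j + (d%:R - mu%:R) * \sum_j sga s j * e j
     + (lam%:R - mu%:R) * \sum_j sga s j * ad j.
    by rewrite !mulr_sumr -!big_split; apply: eq_bigr => j _ /=; ring.
  rewrite E1 E2 E3; ring.
- rewrite !big_pred1_eq big_pred0_eq addr0 /Lx.
  have -> : (fun j => x i == x j) = (fun j => i == j).
    by apply: boolp.funext => j; rewrite inj_eq.
  by [].
- rewrite !big_pred0_eq add0r !addr0.
  rewrite (eq_bigl (fun i => i == tag q)); last by move=> i; rewrite eq_sym.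
  by rewrite big_pred1_eq.
Qed.
End Rep.

Lemma rep_all (TA TX : finType) (eA : rel TA) (eX : rel TX) (m : nat)
  (a : 'I_m -> TA) (x : 'I_m -> TX) (d lam mu : nat) :
  symmetric eX -> irreflexive eX ->
  (forall z, #|[set y | eX z y]| = d) ->
  (forall z w, z != w -> eX z w -> #|[set y | eX z y && eX w y]| = lam) ->
  (forall z w, z != w -> ~~ eX z w -> #|[set y | eX z y && eX w y]| = mu) ->
  injective x -> forall (v : gvert TA TX m) k u,
  ((walks (gadj eA eX a x) k u v)%:R : int) =
  evalu eX x v (stk eA a d lam mu (padjX eX x) (fixv v) (fun i => veq v (x i)) (fun i => vadj eX v (x i)) k) u.
Proof.
move=> sy ir rg la mu' ij v k; elim: k => [|k IH] u.
  exact: rep0.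
exact: (repS sy ir rg la mu' ij).
Qed.


Lemma card_gvert (TA T1 T2 : finType) m : #|T1| = #|T2| ->
  #|{: gvert TA T1 m}| = #|{: gvert TA T2 m}|.
Proof. by move=> H; rewrite !card_sum H. Qed.

Definition embv (TA T : finType) (m : nat) (w : TA + ('I_m + PT m)) : gvert TA T m :=
  match w with inl p => inl (inl p) | inr w => inr w end.

Lemma natz_inj (p q : nat) : (p%:R : int) = q%:R -> p = q.
Proof. by move/eqP; rewrite eqr_nat => /eqP. Qed.

Section Cmp.
Variables (TA : finType) (eA : rel TA) (m : nat) (a : 'I_m -> TA) (d lam mu : nat).
Variables (T1 T2 : finType) (e1 : rel T1) (e2 : rel T2) (x1 : 'I_m -> T1) (x2 : 'I_m -> T2).
Hypotheses (sy1 : symmetric e1) (ir1 : irreflexive e1)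
  (rg1 : forall z, #|[set y | e1 z y]| = d)
  (la1 : forall z w, z != w -> e1 z w -> #|[set y | e1 z y && e1 w y]| = lam)
  (mu1 : forall z w, z != w -> ~~ e1 z w -> #|[set y | e1 z y && e1 w y]| = mu)
  (ij1 : injective x1).
Hypotheses (sy2 : symmetric e2) (ir2 : irreflexive e2)
  (rg2 : forall z, #|[set y | e2 z y]| = d)
  (la2 : forall z w, z != w -> e2 z w -> #|[set y | e2 z y && e2 w y]| = lam)
  (mu2 : forall z w, z != w -> ~~ e2 z w -> #|[set y | e2 z y && e2 w y]| = mu)
  (ij2 : injective x2).
Hypothesis padj : forall i j, e1 (x1 i) (x1 j) = e2 (x2 i) (x2 j).

Local Notation g1 := (gadj eA e1 a x1).
Local Notation g2 := (gadj eA e2 a x2).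

Variables (v1 : gvert TA T1 m) (v2 : gvert TA T2 m).
Hypotheses (hfix : fixv v1 = fixv v2) (hveq : forall i, veq v1 (x1 i) = veq v2 (x2 i))
  (hvadj : forall i, vadj e1 v1 (x1 i) = vadj e2 v2 (x2 i)).

Lemma stk_eq k :
  stk eA a d lam mu (padjX e1 x1) (fixv v1) (fun i => veq v1 (x1 i)) (fun i => vadj e1 v1 (x1 i)) k =
  stk eA a d lam mu (padjX e2 x2) (fixv v2) (fun i => veq v2 (x2 i)) (fun i => vadj e2 v2 (x2 i)) k.
Proof.
have -> : padjX e1 x1 = padjX e2 x2.
  by apply: funext => i; apply: funext => j; exact: padj.
rewrite hfix; congr stk; apply: funext => i; [exact: hveq | exact: hvadj].
Qed.

Lemma Wfix k w : walks g1 k (embv T1 w) v1 = walks g2 k (embv T2 w) v2.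
Proof.
apply: natz_inj; rewrite (rep_all eA a sy1 ir1 rg1 la1 mu1 ij1) (rep_all eA a sy2 ir2 rg2 la2 mu2 ij2).
by rewrite stk_eq; case: w => [p|w].
Qed.

Lemma WX k z1 z2 : (forall j, (z1 == x1 j) = (z2 == x2 j)) ->
  (forall j, e1 z1 (x1 j) = e2 z2 (x2 j)) -> veq v1 z1 = veq v2 z2 ->
  vadj e1 v1 z1 = vadj e2 v2 z2 ->
  walks g1 k (inl (inr z1)) v1 = walks g2 k (inl (inr z2)) v2.
Proof.
move=> H1 H2 H3 H4.
apply: natz_inj; rewrite (rep_all eA a sy1 ir1 rg1 la1 mu1 ij1) (rep_all eA a sy2 ir2 rg2 la2 mu2 ij2).
rewrite stk_eq /= H3 H4.
have -> : (fun j => z1 == x1 j) = (fun j => z2 == x2 j) by apply: funext.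
have -> : (fun j => e1 z1 (x1 j)) = (fun j => e2 z2 (x2 j)) by apply: funext.
by [].
Qed.
End Cmp.

End RingPart.
Import RingPart.


Lemma mult_mapT (T1 T2 : finType) (K Q : Type) (C1 : T1 -> K) (C2 : T2 -> K)
  (f1 : T1 -> Q) (f2 : T2 -> Q) :
  (forall k, #|[set z | `[< C1 z = k >]]| = #|[set z | `[< C2 z = k >]]|) ->
  (forall z1 z2, C1 z1 = C2 z2 -> f1 z1 = f2 z2) ->
  (forall z2 z2', C2 z2 = C2 z2' -> f2 z2 = f2 z2') ->
  forall p, #|[set z | `[< f1 z = p >]]| = #|[set z | `[< f2 z = p >]]|.
Proof.
move=> H H1 H2 p.
exact: (@mult_map T1 T2 K Q C1 C2 predT predT f1 f2 H (fun z1 z2 _ _ => H1 z1 z2)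
   (fun z1 z2 _ _ => H2 z1 z2) p).
Qed.

Lemma mult_exT (T1 T2 : finType) (K : Type) (C1 : T1 -> K) (C2 : T2 -> K) :
  (forall k, #|[set z | `[< C1 z = k >]]| = #|[set z | `[< C2 z = k >]]|) ->
  forall z1, exists z2, C2 z2 = C1 z1.
Proof.
move=> H z1; have [z2 [_ E]] := @mult_ex T1 T2 K C1 C2 predT predT H z1 isT; by exists z2.
Qed.

Lemma card_sumset (A B : finType) (P : pred (A + B)) :
  #|[set u | P u]| = #|[set p | P (inl p)]| + #|[set q | P (inr q)]|.
Proof.
rewrite -!sum1_card.
rewrite (eq_bigl P); last by move=> u; rewrite inE.
rewrite big_sumType; congr (_ + _); apply: eq_bigl => u; by rewrite inE.
Qed.

Lemma pcol_some (T : finType) (m : nat) (x : 'I_m -> T) : injective x ->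
  forall z (j : 'I_m), (pcol x z == Some j.+1) = (z == x j).
Proof.
move=> ij z j; rewrite /pcol; case: pickP => [i /eqP <-|N] /=.
  apply/eqP/eqP => [[E]|/ij ->] //; congr (x _); apply: val_inj; first [exact: E | by case: E].
by apply/esym/negbTE/negP => /eqP E; move: (N j); rewrite E eqxx.
Qed.

Lemma pcol_cases (T : finType) (m : nat) (x : 'I_m -> T) z :
  pcol x z = None \/ exists j : 'I_m, z = x j /\ pcol x z = Some j.+1.
Proof.
rewrite /pcol; case: pickP => [i /eqP <-|N] /=; [right; by exists i | by left].
Qed.

Lemma wlC_proj (T1 T2 : finType) (e1 : rel T1) (e2 : rel T2) c1 c2 s t y1 y2 :
  wlC e1 c1 (s + t) y1 = wlC e2 c2 (s + t) y2 -> wlC e1 c1 s y1 = wlC e2 c2 s y2.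
Proof.
elim: t => [|t IH]; first by rewrite addn0.
rewrite addnS /= => [[E _]]; exact: IH.
Qed.

Lemma wlC_le (T1 T2 : finType) (e1 : rel T1) (e2 : rel T2) c1 c2 s r y1 y2 : s <= r ->
  wlC e1 c1 r y1 = wlC e2 c2 r y2 -> wlC e1 c1 s y1 = wlC e2 c2 s y2.
Proof. by move/subnKC=> <-; apply: wlC_proj. Qed.

Definition Mult (T1 T2 : finType) (e1 : rel T1) (e2 : rel T2) (c1 : T1 -> option nat)
  (c2 : T2 -> option nat) r :=
  forall k, #|[set y | `[< wlC e1 c1 r y = k >]]| = #|[set y | `[< wlC e2 c2 r y = k >]]|.

Lemma Mult_le (T1 T2 : finType) (e1 : rel T1) (e2 : rel T2) c1 c2 s r :
  s <= r -> Mult e1 e2 c1 c2 r -> Mult e1 e2 c1 c2 s.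
Proof.
move=> sr H k; apply: (mult_mapT H).
  by move=> z1 z2; apply: wlC_le.
by move=> z1 z2; apply: wlC_le.
Qed.

Lemma card_bool1 (T : finType) (P : pred T) (y : T) :
  (forall z, P z -> z = y) -> #|[set z | P z]| = P y.
Proof.
move=> H; case: (boolP (P y)) => Py.
  have -> : [set z | P z] = [set y].
    by apply/setP=> z; rewrite !inE; apply/idP/eqP => [/H|->].
  by rewrite cards1.
apply/eqP; rewrite cards_eq0; apply/eqP/setP=> z; rewrite !inE.
by apply/negbTE/negP=> Pz; move: Py; rewrite -(H z Pz) Pz.
Qed.

Lemma C1_data (T1 T2 : finType) (e1 : rel T1) (e2 : rel T2) m
  (x1 : 'I_m -> T1) (x2 : 'I_m -> T2) : injective x1 -> injective x2 ->
  forall z1 z2, wlC e1 (pcol x1) 1 z1 = wlC e2 (pcol x2) 1 z2 ->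
  (forall j, (z1 == x1 j) = (z2 == x2 j)) /\ (forall j, e1 z1 (x1 j) = e2 z2 (x2 j)).
Proof.
move=> ij1 ij2 z1 z2 /= [Ep Ef]; split=> j.
  by rewrite -(pcol_some ij1) -(pcol_some ij2) Ep.
have F : forall (T : finType) (e : rel T) (x : 'I_m -> T), injective x -> forall z,
    #|[set y | e z y && `[< pcol x y = Some j.+1 >]]| = e z (x j).
  move=> T e x ij z; rewrite (card_bool1 (y := x j)).
    suff -> : `[< pcol x (x j) = Some j.+1 >] by rewrite andbT.
    by apply/asboolP/eqP; rewrite pcol_some.
  by move=> y /andP[_ /asboolP/eqP]; rewrite pcol_some // => /eqP.
have := congr1 (fun f => f (Some j.+1)) Ef; rewrite /= F // F //.
by case: (e1 z1 (x1 j)); case: (e2 z2 (x2 j)).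
Qed.

Lemma padj_mult (T1 T2 : finType) (e1 : rel T1) (e2 : rel T2) m
  (x1 : 'I_m -> T1) (x2 : 'I_m -> T2) : injective x1 -> injective x2 ->
  Mult e1 e2 (pcol x1) (pcol x2) 1 ->
  forall i j, e1 (x1 i) (x1 j) = e2 (x2 i) (x2 j).
Proof.
move=> ij1 ij2 H i j.
have [y2 E] := mult_exT H (x1 i).
have [D1 D2] := C1_data ij1 ij2 (esym E).
have Ey : y2 = x2 i by apply/eqP; rewrite -D1 eqxx.
by rewrite D2 Ey.
Qed.


Definition sx (T : finType) (e : rel T) (d lam mu : nat) :=
  [/\ symmetric e, irreflexive e, (forall z, #|[set y | e z y]| = d),
      (forall z w, z != w -> e z w -> #|[set y | e z y && e w y]| = lam) &
      (forall z w, z != w -> ~~ e z w -> #|[set y | e z y && e w y]| = mu)].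

Lemma wstar_eq (V1 V2 : finType) (g1 : rel V1) (g2 : rel V2) u1 v1 u2 v2 :
  #|V1| = #|V2| -> (forall k, walks g1 k u1 v1 = walks g2 k u2 v2) ->
  wstar g1 u1 v1 = wstar g2 u2 v2.
Proof. by move=> H E; rewrite /wstar H; apply: eq_map. Qed.

Section PairW.
Variables (TA : finType) (eA : rel TA) (m : nat) (a : 'I_m -> TA) (d lam mu : nat).
Variables (T1 T2 : finType) (e1 : rel T1) (e2 : rel T2) (x1 : 'I_m -> T1) (x2 : 'I_m -> T2).
Hypotheses (s1 : sx e1 d lam mu) (s2 : sx e2 d lam mu) (ij1 : injective x1) (ij2 : injective x2)
  (padj : forall i j, e1 (x1 i) (x1 j) = e2 (x2 i) (x2 j)) (cT : #|T1| = #|T2|).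

Local Notation g1 := (gadj eA e1 a x1).
Local Notation g2 := (gadj eA e2 a x2).

Definition ty z1 z2 := (forall j, (z1 == x1 j) = (z2 == x2 j)) /\ (forall j, e1 z1 (x1 j) = e2 z2 (x2 j)).

Lemma cV : #|{: gvert TA T1 m}| = #|{: gvert TA T2 m}|.
Proof. exact: card_gvert. Qed.

Lemma W1 w0 w : wstar g1 (embv T1 w0) (embv T1 w) = wstar g2 (embv T2 w0) (embv T2 w).
Proof.
apply: wstar_eq; first exact: cV.
case: s1 => sy1 ir1 rg1 la1 mu1; case: s2 => sy2 ir2 rg2 la2 mu2 k.
by apply: (Wfix eA a sy1 ir1 rg1 la1 mu1 ij1 sy2 ir2 rg2 la2 mu2 ij2 padj) => //; case: w => [p|[i|q]].
Qed.

Lemma W2 w0 y1 y2 : ty y1 y2 ->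
  wstar g1 (embv T1 w0) (inl (inr y1)) = wstar g2 (embv T2 w0) (inl (inr y2)).
Proof.
case=> D1 D2; apply: wstar_eq; first exact: cV.
case: s1 => sy1 ir1 rg1 la1 mu1; case: s2 => sy2 ir2 rg2 la2 mu2 k.
by apply: (Wfix eA a sy1 ir1 rg1 la1 mu1 ij1 sy2 ir2 rg2 la2 mu2 ij2 padj) => // i /=; rewrite ?(eq_sym (x1 i)) ?(eq_sym (x2 i)) ?D1 // sy1 sy2 D2.
Qed.

Lemma W3 z1 z2 w : ty z1 z2 ->
  wstar g1 (inl (inr z1)) (embv T1 w) = wstar g2 (inl (inr z2)) (embv T2 w).
Proof.
case=> D1 D2; apply: wstar_eq; first exact: cV.
case: s1 => sy1 ir1 rg1 la1 mu1; case: s2 => sy2 ir2 rg2 la2 mu2 k.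
by apply: (WX eA a sy1 ir1 rg1 la1 mu1 ij1 sy2 ir2 rg2 la2 mu2 ij2 padj) => //; case: w => [p|[i|q]].
Qed.

Lemma W4 z1 z2 y1 y2 : ty z1 z2 -> ty y1 y2 -> (z1 == y1) = (z2 == y2) -> e1 z1 y1 = e2 z2 y2 ->
  wstar g1 (inl (inr z1)) (inl (inr y1)) = wstar g2 (inl (inr z2)) (inl (inr y2)).
Proof.
case=> D1 D2 [F1 F2] E1 E2; apply: wstar_eq; first exact: cV.
case: s1 => sy1 ir1 rg1 la1 mu1; case: s2 => sy2 ir2 rg2 la2 mu2 k.
apply: (WX eA a sy1 ir1 rg1 la1 mu1 ij1 sy2 ir2 rg2 la2 mu2 ij2 padj) => // i /=; by rewrite ?(eq_sym (x1 i)) ?(eq_sym (x2 i)) ?F1 // sy1 sy2 F2.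
Qed.
End PairW.


Lemma card_sumb (T : finType) (P : pred T) : #|[set z | P z]| = \sum_z (P z : nat).
Proof.
rewrite -sum1_card (eq_bigl P); last by move=> z; rewrite inE.
by rewrite big_mkcond /=; apply: eq_bigr => z _; case: (P z).
Qed.

Lemma trip_set (T : finType) (K : Type) (C : T -> K) (e : rel T) y k b1 b2 :
  [set z | `[< (C z, z == y, e z y) = (k, b1, b2) >]] =
  [set z | `[< C z = k >] && ((z == y) == b1) && (e z y == b2)].
Proof.
apply/setP=> z; rewrite !inE; apply/asboolP/idP.
  case=> E1 E2 E3; rewrite E2 E3 !eqxx !andbT; exact/asboolP.
by case/andP=> /andP[/asboolP -> /eqP ->] /eqP ->.
Qed.

Lemma trip_mult (T1 T2 : finType) (e1 : rel T1) (e2 : rel T2) (c1 : T1 -> option nat)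
  (c2 : T2 -> option nat) s y1 y2 :
  symmetric e1 -> symmetric e2 -> irreflexive e1 -> irreflexive e2 ->
  Mult e1 e2 c1 c2 s.+1 -> wlC e1 c1 s.+2 y1 = wlC e2 c2 s.+2 y2 ->
  forall k, #|[set z | `[< (wlC e1 c1 s.+1 z, z == y1, e1 z y1) = k >]]| =
            #|[set z | `[< (wlC e2 c2 s.+1 z, z == y2, e2 z y2) = k >]]|.
Proof.
move=> sy1 sy2 ir1 ir2 M E [[k b1] b2]; rewrite !trip_set.
have E0 : wlC e1 c1 s.+1 y1 = wlC e2 c2 s.+1 y2 := congr1 fst E.
have Ef : (fun k => #|[set z | e1 y1 z && `[< wlC e1 c1 s.+1 z = k >]]|) =
          (fun k => #|[set z | e2 y2 z && `[< wlC e2 c2 s.+1 z = k >]]|) := congr1 snd E.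
have N : forall k, #|[set z | e1 y1 z && `[< wlC e1 c1 s.+1 z = k >]]| =
                   #|[set z | e2 y2 z && `[< wlC e2 c2 s.+1 z = k >]]|.
  by move=> k'; have := congr1 (fun f => f k') Ef.
case: b1.
  rewrite (card_bool1 (y := y1)); last by move=> z /andP[/andP[_ /eqP/eqP]].
  rewrite (card_bool1 (y := y2)); last by move=> z /andP[/andP[_ /eqP/eqP]].
  by rewrite !eqxx ir1 ir2 E0.
case: b2.
  have -> : [set z | `[< wlC e1 c1 s.+1 z = k >] && ((z == y1) == false) && (e1 z y1 == true)]
     = [set z | e1 y1 z && `[< wlC e1 c1 s.+1 z = k >]].
    apply/setP=> z; rewrite !inE eqbF_neg eqb_id sy1; case: (boolP (e1 y1 z)) => H; last by rewrite !andbF.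
    have -> : (z != y1) by apply/eqP=> Ez; move: H; rewrite Ez ir1.
    by rewrite !andbT.
  have -> : [set z | `[< wlC e2 c2 s.+1 z = k >] && ((z == y2) == false) && (e2 z y2 == true)]
     = [set z | e2 y2 z && `[< wlC e2 c2 s.+1 z = k >]].
    apply/setP=> z; rewrite !inE eqbF_neg eqb_id sy2; case: (boolP (e2 y2 z)) => H; last by rewrite !andbF.
    have -> : (z != y2) by apply/eqP=> Ez; move: H; rewrite Ez ir2.
    by rewrite !andbT.
  exact: N.
have part : forall (T : finType) (e : rel T) (c : T -> option nat) y, symmetric e -> irreflexive e ->
  #|[set z | `[< wlC e c s.+1 z = k >]]| =
  (`[< wlC e c s.+1 y = k >] : nat) + #|[set z | e y z && `[< wlC e c s.+1 z = k >]]| +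
  #|[set z | `[< wlC e c s.+1 z = k >] && ((z == y) == false) && (e z y == false)]|.
  move=> T e c y sy ir.
  have Hy : (`[< wlC e c s.+1 y = k >] : nat) =
            \sum_z ((z == y) && `[< wlC e c s.+1 z = k >] : nat).
    by rewrite (bigD1 y isT) /= eqxx big1 ?addn0 // => z /negbTE ->.
  rewrite !card_sumb Hy -!big_split; apply: eq_bigr => z _.
  move: (`[< wlC e c s.+1 z = k >]) => A.
  case: A; case: (eqVneq z y) => [->|nzy]; rewrite ?eqxx ?ir ?(sy z y) //=;
    by case: (e y z).
have := part _ e1 c1 y1 sy1 ir1; have := part _ e2 c2 y2 sy2 ir2.
rewrite (M k) -E0 (N k) => -> /eqP; by rewrite eqn_add2l => /eqP.
Qed.


Section O.
Variables (TA : finType) (eA : rel TA) (m : nat) (a : 'I_m -> TA) (d lam mu : nat).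

Lemma card_V (T : finType) (P : pred (gvert TA T m)) :
  #|[set v | P v]| = #|[set p | P (embv T (inl p))]| + #|[set y | P (inl (inr y))]|
                     + #|[set w | P (embv T (inr w))]|.
Proof. by rewrite card_sumset (card_sumset (fun u => P (inl u))). Qed.

Definition Ost s (T1 T2 : finType) (e1 : rel T1) (e2 : rel T2) (x1 : 'I_m -> T1) (x2 : 'I_m -> T2) :=
  (forall w0, omega (gadj eA e1 a x1) s (embv T1 w0) = omega (gadj eA e2 a x2) s (embv T2 w0)) /\
  (forall y1 y2, wlC e1 (pcol x1) s.+1 y1 = wlC e2 (pcol x2) s.+1 y2 ->
     omega (gadj eA e1 a x1) s (inl (inr y1)) = omega (gadj eA e2 a x2) s (inl (inr y2))).

Definition Hyp r (T1 T2 : finType) (e1 : rel T1) (e2 : rel T2) (x1 : 'I_m -> T1) (x2 : 'I_m -> T2) :=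
  [/\ sx e1 d lam mu, sx e2 d lam mu, injective x1, injective x2 &
      (#|T1| = #|T2| /\ Mult e1 e2 (pcol x1) (pcol x2) r)].

Lemma Hyp_self r (T : finType) (e : rel T) (x : 'I_m -> T) : sx e d lam mu -> injective x ->
  Hyp r e e x x.
Proof. by move=> H1 H2; split => //; split. Qed.

Lemma Hyp_le s r (T1 T2 : finType) (e1 : rel T1) (e2 : rel T2) (x1 : 'I_m -> T1) (x2 : 'I_m -> T2) : s <= r -> @Hyp r T1 T2 e1 e2 x1 x2 -> @Hyp s T1 T2 e1 e2 x1 x2.
Proof. by move=> sr [? ? ? ? [? M]]; split => //; split => //; apply: Mult_le M. Qed.

Lemma Hyp_padj r (T1 T2 : finType) (e1 : rel T1) (e2 : rel T2) (x1 : 'I_m -> T1) (x2 : 'I_m -> T2) : 0 < r -> @Hyp r T1 T2 e1 e2 x1 x2 ->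
  forall i j, e1 (x1 i) (x1 j) = e2 (x2 i) (x2 j).
Proof.
move=> r0 H; have [_ _ ij1 ij2 [_ M]] := Hyp_le r0 H; exact: padj_mult.
Qed.

Lemma ty_of (s : nat) (T1 T2 : finType) (e1 : rel T1) (e2 : rel T2) (x1 : 'I_m -> T1) (x2 : 'I_m -> T2) : injective x1 -> injective x2 ->
  forall z1 z2, wlC e1 (pcol x1) s.+1 z1 = wlC e2 (pcol x2) s.+1 z2 -> ty e1 e2 x1 x2 z1 z2.
Proof.
move=> ij1 ij2 z1 z2 E; have := wlC_le (s := 1) (isT : 1 <= s.+1) E.
by move/(C1_data ij1 ij2).
Qed.

Lemma O0 r (T1 T2 : finType) (e1 : rel T1) (e2 : rel T2) (x1 : 'I_m -> T1) (x2 : 'I_m -> T2) : 0 < r -> @Hyp r T1 T2 e1 e2 x1 x2 -> Ost 0 e1 e2 x1 x2.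
Proof.
move=> r0 H; have P := Hyp_padj r0 H; case: H => s1 s2 ij1 ij2 [cT _].
split.
  by move=> w0 /=; apply: (W1 eA a s1 s2 ij1 ij2 P cT).
move=> y1 y2 E /=; apply: (W4 eA a s1 s2 ij1 ij2 P cT); try exact: (ty_of ij1 ij2 E).
  by rewrite !eqxx.
by case: s1 => _ -> _ _ _; case: s2 => _ -> _ _ _.
Qed.

Lemma omegaS (V : finType) (g : rel V) s u :
  omega g s.+1 u = (omega g s u, fun p => #|[set v | `[< (wstar g u v, omega g s v) = p >]]|).
Proof. by []. Qed.

Lemma OS s : (forall (T1 T2 : finType) (e1 : rel T1) (e2 : rel T2) (x1 : 'I_m -> T1) (x2 : 'I_m -> T2),
     @Hyp s.+1 T1 T2 e1 e2 x1 x2 -> Ost s e1 e2 x1 x2) ->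
  forall (T1 T2 : finType) (e1 : rel T1) (e2 : rel T2) (x1 : 'I_m -> T1) (x2 : 'I_m -> T2),
     @Hyp s.+2 T1 T2 e1 e2 x1 x2 -> Ost s.+1 e1 e2 x1 x2.
Proof.
move=> IH T1 T2 e1 e2 x1 x2 H.
have P := Hyp_padj (isT : 0 < s.+2) H.
have [H1a H1b] := IH _ _ _ _ _ _ (Hyp_le (leqnSn _) H).
case: H => s1 s2 ij1 ij2 [cT M].
have [H2a H2b] := IH _ _ _ _ _ _ (Hyp_self s.+1 s2 ij2).
have M1 : Mult e1 e2 (pcol x1) (pcol x2) s.+1 := Mult_le (leqnSn _) M.
have P22 : forall i j, e2 (x2 i) (x2 j) = e2 (x2 i) (x2 j) by [].
set g1 := gadj eA e1 a x1; set g2 := gadj eA e2 a x2.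
split.
- move=> w0; rewrite !omegaS H1a; congr pair; apply: funext => p.
  rewrite !card_V; congr (_ + _ + _).
  + apply: eq_card => q; rewrite !inE.
    by rewrite (W1 eA a s1 s2 ij1 ij2 P cT w0 (inl q)) H1a.
  + apply: (@mult_mapT _ _ _ _ _ _
       (fun y => (wstar g1 (embv T1 w0) (inl (inr y)), omega g1 s (inl (inr y))))
       (fun y => (wstar g2 (embv T2 w0) (inl (inr y)), omega g2 s (inl (inr y)))) M1)
       => [z1 z2 E|z1 z2 E].
      by rewrite (W2 eA a s1 s2 ij1 ij2 P cT w0 (ty_of ij1 ij2 E)) (H1b _ _ E).
    by rewrite (W2 eA a s2 s2 ij2 ij2 P22 (erefl _) w0 (ty_of ij2 ij2 E)) (H2b _ _ E).
  + apply: eq_card => q; rewrite !inE.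
    by rewrite (W1 eA a s1 s2 ij1 ij2 P cT w0 (inr q)) H1a.
- move=> y1 y2 E; rewrite !omegaS (H1b _ _ (wlC_le (leqnSn _) E)); congr pair; apply: funext => p.
  have tyy := ty_of ij1 ij2 E.
  have tyy2 : ty e2 e2 x2 x2 y2 y2 by split.
  case: (s1) => sy1 ir1 _ _ _; case: (s2) => sy2 ir2 _ _ _.
  rewrite !card_V; congr (_ + _ + _).
  + apply: eq_card => q; rewrite !inE.
    by rewrite (W3 eA a s1 s2 ij1 ij2 P cT (inl q) tyy) H1a.
  + apply: (@mult_mapT _ _ _ _ (fun z => (wlC e1 (pcol x1) s.+1 z, z == y1, e1 z y1))
       (fun z => (wlC e2 (pcol x2) s.+1 z, z == y2, e2 z y2))
       (fun z => (wstar g1 (inl (inr y1)) (inl (inr z)), omega g1 s (inl (inr z))))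
       (fun z => (wstar g2 (inl (inr y2)) (inl (inr z)), omega g2 s (inl (inr z))))
       (trip_mult sy1 sy2 ir1 ir2 M1 E)) => [z1 z2 E3|z1 z2 E3].
      have Ec : wlC e1 (pcol x1) s.+1 z1 = wlC e2 (pcol x2) s.+1 z2 := congr1 (fun t => t.1.1) E3.
      have Eq : (z1 == y1) = (z2 == y2) := congr1 (fun t => t.1.2) E3.
      have Ee : e1 z1 y1 = e2 z2 y2 := congr1 snd E3.
      rewrite (W4 eA a s1 s2 ij1 ij2 P cT tyy (ty_of ij1 ij2 Ec)) ?(H1b _ _ Ec) //.
        by rewrite eq_sym Eq eq_sym.
      by rewrite sy1 Ee sy2.
    have Ec : wlC e2 (pcol x2) s.+1 z1 = wlC e2 (pcol x2) s.+1 z2 := congr1 (fun t => t.1.1) E3.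
    have Eq : (z1 == y2) = (z2 == y2) := congr1 (fun t => t.1.2) E3.
    have Ee : e2 z1 y2 = e2 z2 y2 := congr1 snd E3.
    rewrite (W4 eA a s2 s2 ij2 ij2 P22 (erefl _) tyy2 (ty_of ij2 ij2 Ec)) ?(H2b _ _ Ec) //.
      by rewrite eq_sym Eq eq_sym.
    by rewrite sy2 Ee sy2.
  + apply: eq_card => q; rewrite !inE.
    by rewrite (W3 eA a s1 s2 ij1 ij2 P cT (inr q) tyy) H1a.
Qed.

Lemma Oall s : forall (T1 T2 : finType) (e1 : rel T1) (e2 : rel T2) (x1 : 'I_m -> T1) (x2 : 'I_m -> T2),
     @Hyp s.+1 T1 T2 e1 e2 x1 x2 -> Ost s e1 e2 x1 x2.
Proof.
elim: s => [|s IH] T1 T2 e1 e2 x1 x2 H; first exact: (O0 (isT : 0 < 1) H).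
exact: OS IH _ _ _ _ _ _ H.
Qed.

Lemma part2_gen r (T1 T2 : finType) (e1 : rel T1) (e2 : rel T2) (x1 : 'I_m -> T1) (x2 : 'I_m -> T2) :
  0 < r -> @Hyp r T1 T2 e1 e2 x1 x2 ->
  omegams (gadj eA e1 a x1) r.-1 = omegams (gadj eA e2 a x2) r.-1.
Proof.
case: r => // s _ H.
have [Ha Hb] := Oall H.
case: H => s1 s2 ij1 ij2 [cT M].
have [_ Hb2] := Oall (Hyp_self s.+1 s2 ij2).
apply: funext => o; rewrite /omegams /= !card_V; congr (_ + _ + _).
- by apply: eq_card => q; rewrite !inE Ha.
- apply: (@mult_mapT _ _ _ _ _ _ (fun y => omega (gadj eA e1 a x1) s (inl (inr y)))
     (fun y => omega (gadj eA e2 a x2) s (inl (inr y))) M) => [z1 z2 E|z1 z2 E].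
    exact: Hb.
  exact: Hb2.
- by apply: eq_card => q; rewrite !inE Ha.
Qed.
End O.


Definition deg (V : finType) (g : rel V) u := #|[set w | g u w]|.

Lemma card4 (TL TR : finType) m (P : pred (gvert TL TR m)) :
  #|[set w | P w]| = #|[set p | P (inl (inl p))]| + #|[set z | P (inl (inr z))]|
     + #|[set i | P (inr (inl i))]| + #|[set q | P (inr (inr q))]|.
Proof.
rewrite card_sumset (card_sumset (fun u => P (inl u))) (card_sumset (fun u => P (inr u))).
by rewrite !addnA.
Qed.

Lemma card_set0 (T : finType) : #|[set z : T | false]| = 0.
Proof. by apply/eqP; rewrite cards_eq0; apply/eqP/setP=> z; rewrite inE. Qed.

Lemma cnt_col (T : finType) m (x : 'I_m -> T) : injective x ->
  forall p, #|[set i | p == x i]| = (pcol x p != None).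
Proof.
move=> ij p; case: (pcol_cases x p) => [N|[j [E S]]].
  rewrite N /=; apply/eqP; rewrite cards_eq0; apply/eqP/setP=> i; rewrite !inE.
  by apply/negbTE/negP; rewrite -(pcol_some ij) N.
rewrite S /= (card_bool1 (y := j)); first by rewrite E eqxx.
by move=> i; rewrite E => /eqP/ij.
Qed.

Lemma card_tag m (i : 'I_m) : #|[set q : PT m | tag q == i]| = i.+1.
Proof.
have -> : [set q : PT m | tag q == i] = (fun k : 'I_i.+1 => Tagged (fun i : 'I_m => 'I_i.+1) k) @: setT.
  apply/setP=> q; rewrite !inE; apply/idP/imsetP.
    case: q => j k /= /eqP Ej; subst j; by exists k.
  by case=> k _ ->.
rewrite card_imset ?cardsT ?card_ord //.
move=> k1 k2 E; apply: val_inj.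
exact: (congr1 (fun q : PT m => nat_of_ord (tagged q)) E).
Qed.

Section Deg.
Variables (TL TR : finType) (eL : rel TL) (eR : rel TR) (m : nat) (xL : 'I_m -> TL)
  (xR : 'I_m -> TR) (d : nat).
Hypotheses (rgL : forall z, #|[set y | eL z y]| = d) (rgR : forall z, #|[set y | eR z y]| = d)
  (ijL : injective xL) (ijR : injective xR).
Local Notation g := (gadj eL eR xL xR).

Lemma degL p : deg g (inl (inl p)) = d + (pcol xL p != None).
Proof.
rewrite /deg card4 /= !card_set0 addn0 rgL -(cnt_col ijL p); congr (_ + _).
by rewrite addn0.
Qed.

Lemma degR z : deg g (inl (inr z)) = d + (pcol xR z != None).
Proof.
rewrite /deg card4 /= !card_set0 rgR -(cnt_col ijR z) add0n addn0.
first [reflexivity | congr (_ + #|_|); apply/setP => i; by rewrite !inE | congr (_ + _); apply: eq_card => i; by rewrite !inE].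
Qed.

Lemma degC i : deg g (inr (inl i)) = i + 3.
Proof.
rewrite /deg card4 /= card_set0 addn0 card_tag.
rewrite (card_bool1 (y := xL i)) ?eqxx; last by move=> p /eqP.
rewrite (card_bool1 (y := xR i)) ?eqxx; last by move=> p /eqP.
by rewrite addnC addn2 addn3.
Qed.

Lemma degP q : deg g (inr (inr q)) = 1.
Proof.
rewrite /deg card4 /= !card_set0 add0n.
rewrite (card_bool1 (y := tag q)) ?eqxx //; by move=> i /eqP.
Qed.
End Deg.


Definition mk1 (D : nat) : wlcol 1 := (None, fun k => if k is None then D else 0).

Lemma mk1_inj : injective mk1.
Proof. by move=> D1 D2 /(congr1 (fun c => c.2 None)). Qed.

Lemma C1_mk1 (V : finType) (g : rel V) u : wlC g (@nocol V) 1 u = mk1 (deg g u).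
Proof.
rewrite /= /mk1 /nocol; congr pair; apply: funext => [[k|]].
  apply/eqP; rewrite cards_eq0; apply/eqP/setP=> w; rewrite !inE.
  by case: (asboolP (None = Some k)); rewrite ?andbF.
by rewrite /deg; apply: eq_card => w; rewrite !inE; case: (asboolP (@None nat = None)); rewrite ?andbT.
Qed.

Lemma deg_eq (V1 V2 : finType) (g1 : rel V1) (g2 : rel V2) u1 u2 r : 1 <= r ->
  wlC g1 (@nocol V1) r u1 = wlC g2 (@nocol V2) r u2 -> deg g1 u1 = deg g2 u2.
Proof. by move=> r1 /(wlC_le r1); rewrite !C1_mk1 => /mk1_inj. Qed.

Lemma feat (V1 V2 : finType) (g1 : rel V1) (g2 : rel V2) u1 u2 :
  wlC g1 (@nocol V1) 2 u1 = wlC g2 (@nocol V2) 2 u2 -> forall P : pred nat,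
  #|[set w | g1 u1 w && P (deg g1 w)]| = #|[set w | g2 u2 w && P (deg g2 w)]|.
Proof.
move=> E P.
have Ef : (fun k => #|[set w | g1 u1 w && `[< wlC g1 (@nocol V1) 1 w = k >]]|) =
          (fun k => #|[set w | g2 u2 w && `[< wlC g2 (@nocol V2) 1 w = k >]]|) := congr1 snd E.
have H := @mult_pred V1 V2 _ (wlC g1 (@nocol V1) 1) (wlC g2 (@nocol V2) 1) (g1 u1) (g2 u2)
   (fun k => congr1 (fun f => f k) Ef) (fun l => `[< exists D, P D /\ l = mk1 D >]).
have R : forall (V : finType) (g : rel V) w,
    `[< exists D, P D /\ wlC g (@nocol V) 1 w = mk1 D >] = P (deg g w).
  move=> V g w; rewrite C1_mk1; apply/asboolP/idP.
    by case=> D [PD /mk1_inj ->].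
  by move=> Pw; exists (deg g w).
have -> : [set w | g1 u1 w && P (deg g1 w)] =
          [set w | g1 u1 w && `[< exists D, P D /\ wlC g1 (@nocol V1) 1 w = mk1 D >]].
  by apply/setP=> w; rewrite !inE R.
have -> : [set w | g2 u2 w && P (deg g2 w)] =
          [set w | g2 u2 w && `[< exists D, P D /\ wlC g2 (@nocol V2) 1 w = mk1 D >]].
  by apply/setP=> w; rewrite !inE R.
exact: H.
Qed.

Lemma set_empty (T : finType) (P : pred T) : (forall z, P z -> False) -> #|[set z | P z]| = 0.
Proof.
move=> H; apply/eqP; rewrite cards_eq0; apply/eqP/setP=> z; rewrite !inE.
by apply/negbTE/negP=> /H.
Qed.

Lemma set_pos (T : finType) (P : pred T) z : P z -> 0 < #|[set z | P z]|.
Proof. by move=> Pz; apply/card_gt0P; exists z; rewrite inE. Qed.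

Definition gok (TL TR : finType) (eL : rel TL) (eR : rel TR) m (xL : 'I_m -> TL) (xR : 'I_m -> TR) d :=
  [/\ (forall z, #|[set y | eL z y]| = d), (forall z, #|[set y | eR z y]| = d), injective xL & injective xR].

Definition isg (TL TR : finType) m (u : gvert TL TR m) := if u is inl _ then true else false.

Section One.
Variables (TL TR : finType) (eL : rel TL) (eR : rel TR) (m : nat) (xL : 'I_m -> TL)
  (xR : 'I_m -> TR) (d : nat).
Hypothesis ok : gok eL eR xL xR d.
Local Notation g := (gadj eL eR xL xR).

Definition colg (u : gvert TL TR m) : bool :=
  match u with inl (inl p) => pcol xL p != None | inl (inr z) => pcol xR z != None | _ => false end.
Definition pcg (u : gvert TL TR m) : option nat :=
  match u with inl (inl p) => pcol xL p | inl (inr z) => pcol xR z | _ => None end.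

Lemma Du u : isg u -> deg g u = d + colg u.
Proof.
case: ok => rL rR iL iR; case: u => [[p|z]|w] // _ /=.
  exact: degL.
exact: degR.
Qed.

Lemma Nu u w : isg u -> g u w ->
  if isg w then (d <= deg g w) && (deg g w <= d.+1) else (3 <= deg g w) && colg u.
Proof.
case: ok => rL rR iL iR.
case: u => [[p|z]|w0] // _; case: w => [[p'|z']|[i|q]] //= Hw.
- rewrite (degL eR xR rL iL) leq_addr /=; case: (pcol xL p' != None) => /=; lia.
- rewrite (degC eL eR xL xR) leq_addl /=.
  by move: Hw => /eqP ->; rewrite (eqP (_ : pcol xL (xL i) == Some i.+1)) // pcol_some.
- rewrite (degR eL xL rR iR) leq_addr /=; case: (pcol xR z' != None) => /=; lia.
- rewrite (degC eL eR xL xR) leq_addl /=.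
  by move: Hw => /eqP ->; rewrite (eqP (_ : pcol xR (xR i) == Some i.+1)) // pcol_some.
Qed.

Lemma col_conn u : isg u -> colg u -> exists i : 'I_m, g u (inr (inl i)) /\ pcg u = Some i.+1.
Proof.
case: ok => rL rR iL iR.
case: u => [[p|z]|w0] // _ /=.
  case: (pcol_cases xL p) => [->|[j [E S]]] //= _; exists j; by rewrite S E eqxx.
case: (pcol_cases xR z) => [->|[j [E S]]] //= _; exists j; by rewrite S E eqxx.
Qed.

Lemma nbr_conn u i : isg u -> g u (inr (inl i)) -> pcg u = Some i.+1.
Proof.
case: ok => rL rR iL iR.
case: u => [[p|z]|w0] // _ /= /eqP ->; apply/eqP; by rewrite pcol_some.
Qed.
End One.

Section Sep.
Variable d : nat.
Hypothesis d1 : 1 <= d.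

Lemma sep2 (TL1 TR1 TL2 TR2 : finType) (eL1 : rel TL1) (eR1 : rel TR1) (eL2 : rel TL2)
  (eR2 : rel TR2) m (xL1 : 'I_m -> TL1) (xR1 : 'I_m -> TR1) (xL2 : 'I_m -> TL2) (xR2 : 'I_m -> TR2) :
  gok eL1 eR1 xL1 xR1 d -> gok eL2 eR2 xL2 xR2 d ->
  forall u v, isg u -> ~~ isg v ->
  wlC (gadj eL1 eR1 xL1 xR1) (@nocol _) 2 u <> wlC (gadj eL2 eR2 xL2 xR2) (@nocol _) 2 v.
Proof.
move=> ok1 ok2 u v gu gv E.
have D := deg_eq (isT : 0 < 2) E.
have F := feat E.
have ok1' := ok1; have ok2' := ok2.
case: ok1' => rL1 rR1 iL1 iR1; case: ok2' => rL2 rR2 iL2 iR2.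
rewrite (Du ok1 gu) in D.
case: v gv E D F => [[p|z]|[i|q]] // _ E D F.
- rewrite (degC eL2 eR2 xL2 xR2) in D.
  have d2 : 2 <= d by move: D; case: (colg xL1 xR1 u); lia.
  have := F (fun D => D == 1).
  rewrite set_empty.
    move=> /esym /eqP; rewrite -leqn0 leqNgt => /negP; apply.
    apply: (@set_pos _ _ (inr (inr (Tagged (fun i : 'I_m => 'I_i.+1) (ord0 : 'I_i.+1))))).
    by rewrite /= eqxx (degP _ _ _ _).
  move=> w /andP[Hw /eqP Dw]; have := Nu ok1 gu Hw; rewrite Dw.
  by case: (isg w) => //; case/andP; lia.
- rewrite (degP _ _ _ _) in D.
  have d1' : d = 1 by move: D d1; case: (colg xL1 xR1 u); lia.
  have c0 : colg xL1 xR1 u = false by move: D; rewrite d1'; case: (colg xL1 xR1 u).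
  have := F (fun D => 3 <= D).
  rewrite set_empty.
    move=> /esym /eqP; rewrite -leqn0 leqNgt => /negP; apply.
    apply: (@set_pos _ _ (inr (inl (tag q)))).
    by rewrite /= eqxx (degC eL2 eR2 xL2 xR2) leq_addl.
  move=> w /andP[Hw Dw]; have := Nu ok1 gu Hw; rewrite c0 andbF d1'.
  by case: (isg w) => //; case/andP; lia.
Qed.
End Sep.


Definition xcol (TL TR : finType) (eL : rel TL) (eR : rel TR) m (xL : 'I_m -> TL) (xR : 'I_m -> TR)
  s (u : gvert TL TR m) : option (wlcol s) :=
  match u with
  | inl (inl p) => Some (wlC eL (pcol xL) s p)
  | inl (inr z) => Some (wlC eR (pcol xR) s z)
  | _ => None
  end.

Lemma colg_pcg (TL TR : finType) m (xL : 'I_m -> TL) (xR : 'I_m -> TR) (u : gvert TL TR m) :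
  colg xL xR u = (pcg xL xR u != None).
Proof. by case: u => [[p|z]|w]. Qed.

Lemma xcolS (TL TR : finType) (eL : rel TL) (eR : rel TR) m (xL : 'I_m -> TL) (xR : 'I_m -> TR) s
  (u : gvert TL TR m) : isg u ->
  xcol eL eR xL xR s.+1 u = omap (fun c => (c, fun k =>
     #|[set w | gadj eL eR xL xR u w && `[< xcol eL eR xL xR s w = Some k >]]|)) (xcol eL eR xL xR s u).
Proof.
have SE : forall (K : Type) (a b : K), `[< Some a = Some b >] = `[< a = b >].
  by move=> K a b; apply/asboolP/asboolP => [[->]|->].
have NE : forall (K : Type) (b : K), `[< None = Some b >] = false.
  by move=> K b; apply/asboolP.
case: u => [[p|z]|w] // _ /=; congr Some; congr pair; apply: funext => k;
  rewrite card4 /= [X in _ + X + _]set_empty ?card_set0 ?addn0 ?add0n;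
  try (by move=> i /andP[_ /asboolP]);
  by apply: eq_card => y; rewrite !inE SE.
Qed.

Section Sim.
Variables (m d : nat).
Hypothesis d1 : 1 <= d.

Lemma dec3 (TL1 TR1 TL2 TR2 : finType) (eL1 : rel TL1) (eR1 : rel TR1) (eL2 : rel TL2)
  (eR2 : rel TR2) (xL1 : 'I_m -> TL1) (xR1 : 'I_m -> TR1) (xL2 : 'I_m -> TL2) (xR2 : 'I_m -> TR2) :
  gok eL1 eR1 xL1 xR1 d -> gok eL2 eR2 xL2 xR2 d ->
  forall u v, isg u -> isg v ->
  wlC (gadj eL1 eR1 xL1 xR1) (@nocol _) 3 u = wlC (gadj eL2 eR2 xL2 xR2) (@nocol _) 3 v ->
  pcg xL1 xR1 u = pcg xL2 xR2 v.
Proof.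
move=> ok1 ok2 u v gu gv E.
have D := deg_eq (isT : 0 < 3) E.
move: D; rewrite (Du ok1 gu) (Du ok2 gv) => /eqP; rewrite eqn_add2l => D.
have {}D : colg xL1 xR1 u = colg xL2 xR2 v.
  by move: D; case: (colg xL1 xR1 u); case: (colg xL2 xR2 v).
case cu: (colg xL1 xR1 u).
  have [i [Hi Pi]] := col_conn ok1 gu cu.
  have cv : colg xL2 xR2 v by rewrite -D.
  set g1 := gadj eL1 eR1 xL1 xR1 in E Hi; set g2 := gadj eL2 eR2 xL2 xR2 in E.
  have Ef : (fun k => #|[set w | g1 u w && `[< wlC g1 (@nocol _) 2 w = k >]]|) =
            (fun k => #|[set w | g2 v w && `[< wlC g2 (@nocol _) 2 w = k >]]|) := congr1 snd E.
  have := congr1 (fun f => f (wlC g1 (@nocol _) 2 (inr (inl i)))) Ef => /= H.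
  have : 0 < #|[set w | g2 v w && `[< wlC g2 (@nocol _) 2 w = wlC g1 (@nocol _) 2 (inr (inl i)) >]]|.
    rewrite -H; apply: (set_pos (z := inr (inl i))); rewrite Hi /=; exact/asboolP.
  case/card_gt0P => w; rewrite inE => /andP[Hw /asboolP Ew].
  case: w Hw Ew => [w|[j|q]] Hw Ew.
  - by case: (sep2 d1 ok2 ok1 (isT : isg (inl w)) (isT : ~~ isg (inr (inl i))) Ew).
  - rewrite Pi (nbr_conn ok2 gv Hw).
    have := deg_eq (isT : 0 < 2) Ew; rewrite (degC _ _ _ _) (degC _ _ _ _) => Dj.
    by have -> : j = i :> nat by lia.
  - by case: v gv Hw {E D cv Ef H Ew} => [[]|].
have cv : colg xL2 xR2 v = false by rewrite -D.
move: cu cv; rewrite !colg_pcg; do 2 case: (_ == None) / eqP => //.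
by move=> -> ->.
Qed.

Definition Lsim s := forall (TL1 TR1 TL2 TR2 : finType) (eL1 : rel TL1) (eR1 : rel TR1) (eL2 : rel TL2)
  (eR2 : rel TR2) (xL1 : 'I_m -> TL1) (xR1 : 'I_m -> TR1) (xL2 : 'I_m -> TL2) (xR2 : 'I_m -> TR2),
  gok eL1 eR1 xL1 xR1 d -> gok eL2 eR2 xL2 xR2 d -> forall u v,
  wlC (gadj eL1 eR1 xL1 xR1) (@nocol _) s.+3 u = wlC (gadj eL2 eR2 xL2 xR2) (@nocol _) s.+3 v ->
  xcol eL1 eR1 xL1 xR1 s u = xcol eL2 eR2 xL2 xR2 s v.

Lemma L0 : Lsim 0.
Proof.
move=> TL1 TR1 TL2 TR2 eL1 eR1 eL2 eR2 xL1 xR1 xL2 xR2 ok1 ok2 u v E.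
have E2 := wlC_le (isT : 2 <= 3) E.
case gu: (isg u); case gv: (isg v).
- have := dec3 ok1 ok2 gu gv E.
  by case: u gu {E E2} => [[p|z]|w] //= _; case: v gv => [[p'|z']|w'] //= _ ->.
- by case: (sep2 d1 ok1 ok2 gu (negbT gv) E2).
- by case: (sep2 d1 ok2 ok1 gv (negbT gu) (esym E2)).
- by case: u gu {E E2} => [[p|z]|w] //= _; case: v gv => [[p'|z']|w'].
Qed.

Lemma LS s : Lsim s -> Lsim s.+1.
Proof.
move=> IH TL1 TR1 TL2 TR2 eL1 eR1 eL2 eR2 xL1 xR1 xL2 xR2 ok1 ok2 u v E.
set g1 := gadj eL1 eR1 xL1 xR1 in E *; set g2 := gadj eL2 eR2 xL2 xR2 in E *.
have E' : wlC g1 (@nocol _) s.+3 u = wlC g2 (@nocol _) s.+3 v := congr1 fst E.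
have X := IH _ _ _ _ _ _ _ _ _ _ _ _ ok1 ok2 u v E'.
case gu: (isg u); case gv: (isg v).
- rewrite !xcolS // X; case: (xcol eL2 eR2 xL2 xR2 s v) => [c|] //=.
  congr (Some (c, _)); apply: funext => k.
  have Ef : (fun k => #|[set w | g1 u w && `[< wlC g1 (@nocol _) s.+3 w = k >]]|) =
            (fun k => #|[set w | g2 v w && `[< wlC g2 (@nocol _) s.+3 w = k >]]|) := congr1 snd E.
  apply: (@mult_map _ _ _ _ _ _ (g1 u) (g2 v) _ _ (fun k => congr1 (fun f => f k) Ef)).
    by move=> z1 z2 _ _; apply: IH.
  by move=> z1 z2 _ _; apply: IH.
- by move: X; case: u gu {E E'} => [[p|z]|w] //= _; case: v gv => [[p'|z']|w'].
- by move: X; case: u gu {E E'} => [[p|z]|w] //= _; case: v gv => [[p'|z']|w'].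
- by case: u gu {E E' X} => [[p|z]|w] //= _; case: v gv => [[p'|z']|w'].
Qed.

Lemma Lall s : Lsim s.
Proof. elim: s => [|s IH]; [exact: L0 | exact: LS]. Qed.
End Sim.


Lemma pcol_mult (TA TB : finType) m (a : 'I_m -> TA) (b : 'I_m -> TB) :
  injective a -> injective b -> #|TA| = #|TB| ->
  forall o, #|[set x | `[< pcol a x = o >]]| = #|[set y | `[< pcol b y = o >]]|.
Proof.
move=> ia ib cT.
have K : forall (T : finType) (x : 'I_m -> T), injective x -> forall o,
    #|[set z | `[< pcol x z = o >]]| =
    (if o is Some j then #|[set i : 'I_m | i.+1 == j]| else #|T| - m).
  move=> T x ij [j|].
    have -> : [set z | `[< pcol x z = Some j >]] = x @: [set i : 'I_m | i.+1 == j].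
      apply/setP=> z; rewrite inE; apply/asboolP/imsetP.
        case: (pcol_cases x z) => [->|[i [-> ->]]] // [<-]; exists i => //; by rewrite inE.
      case=> i; rewrite inE => /eqP <- ->.
      by apply/eqP; rewrite pcol_some.
    by rewrite card_imset.
  have -> : [set z | `[< pcol x z = None >]] = ~: (x @: setT).
    apply/setP=> z; rewrite !inE; apply/asboolP/negP.
      move=> N /imsetP [i _ E]; move: N; rewrite E.
      by rewrite (eqP (_ : pcol x (x i) == Some i.+1)) // pcol_some.
    case: (pcol_cases x z) => [//|[i [-> _]]] H; case: H; apply/imsetP; by exists i.
  by rewrite cardsCs setCK card_imset // cardsT card_ord.
by move=> o; rewrite !K // cT.
Qed.

Lemma degen (TA TB : finType) (eA : rel TA) (eB : rel TB) m (a : 'I_m -> TA) (b : 'I_m -> TB)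
  r (F : option nat -> wlcol r) : injective a -> injective b -> #|TA| = #|TB| ->
  (forall x, wlC eA (pcol a) r x = F (pcol a x)) -> (forall y, wlC eB (pcol b) r y = F (pcol b y)) ->
  wlms eA (pcol a) r = wlms eB (pcol b) r.
Proof.
move=> ia ib cT HA HB; apply: funext => k; rewrite /wlms.
apply: (mult_mapT (pcol_mult ia ib cT)).
  by move=> z1 z2 E; rewrite HA HB E.
by move=> z1 z2 E; rewrite !HB E.
Qed.

Fixpoint hE (r : nat) : option nat -> wlcol r :=
  match r return option nat -> wlcol r with
  | 0 => fun o => o
  | r'.+1 => fun o => (hE r' o, fun _ => 0)
  end.

Lemma wl_edgeless (T : finType) (e : rel T) c r x : (forall x y, e x y = false) ->
  wlC e c r x = hE r (c x).
Proof.
move=> H; elim: r x => [|r IH] x //=; rewrite IH; congr pair; apply: funext => k.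
by apply: set_empty => y; rewrite H.
Qed.

Fixpoint hR (d r : nat) : wlcol r :=
  match r return wlcol r with
  | 0 => None
  | r'.+1 => (hR d r', fun k => if `[< hR d r' = k >] then d else 0)
  end.

Lemma wl_reg (T : finType) (e : rel T) c d r x : (forall x, c x = None) ->
  (forall x, #|[set y | e x y]| = d) -> wlC e c r x = hR d r.
Proof.
move=> Hc Hd; elim: r x => [|r IH] x //=; rewrite IH; congr pair; apply: funext => k.
case: (asboolP (hR d r = k)) => [E|N].
  rewrite -(Hd x); apply: eq_card => y; rewrite !inE IH.
  by case: (asboolP (hR d r = k)); rewrite ?andbT.
by apply: set_empty => y /andP[_ /asboolP]; rewrite IH.
Qed.


Lemma srg_sx (T : finType) (e : rel T) n d lam mu : srg e n d lam mu -> sx e d lam mu /\ #|T| = n.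
Proof. by case=> [[sy ir] cT rg la mu']; split. Qed.

Lemma part1_main (TA TB : finType) (eA : rel TA) (eB : rel TB) (n d lam mu m : nat)
  (a : 'I_m -> TA) (b : 'I_m -> TB) :
  srg eA n d lam mu -> srg eB n d lam mu -> injective a -> injective b ->
  WL1 (gadj eA eB a b) (@nocol (gvert TA TB m)) = WL1 (gadj eA eA a a) (@nocol (gvert TA TA m)) ->
  WL1 eA (pcol a) = WL1 eB (pcol b).
Proof.
move=> sA sB ia ib HG.
have [[syA irA rgA laA muA] cA] := srg_sx sA.
have [[syB irB rgB laB muB] cB] := srg_sx sB.
have cT : #|TB| = #|TA| by rewrite cA cB.
rewrite /WL1 cT; congr existT.
case: (posnP d) => [d0|d1].
  apply: (degen (F := hE #|TA|) ia ib (esym cT)) => x; apply: wl_edgeless => p q.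
    apply/negP=> E; have := rgA p; rewrite d0 => /eqP; rewrite cards_eq0 => /eqP/setP/(_ q).
    by rewrite !inE E.
  apply/negP=> E; have := rgB p; rewrite d0 => /eqP; rewrite cards_eq0 => /eqP/setP/(_ q).
  by rewrite !inE E.
case: (posnP m) => [m0|m1].
  apply: (degen (F := fun _ => hR d #|TA|) ia ib (esym cT)) => x; apply: wl_reg => //;
    move=> y; rewrite /pcol; case: pickP => // i; by move: (ltn_ord i); rewrite [X in _ < X]m0.
set G := gadj eA eB a b; set H := gadj eA eA a a.
have cN : #|{: gvert TA TA m}| = #|{: gvert TA TB m}| by rewrite !card_sum cT.
move: HG; rewrite /WL1 cN => HG0.
pose N := #|{: gvert TA TB m}|.
have HG : wlms G (@nocol _) N = wlms H (@nocol _) N :=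
  inj_pair2_eq_dec _ Nat.eq_dec (fun N => wlcol N -> nat) _ _ _ HG0.
have MN : Mult G H (@nocol _) (@nocol _) N by move=> k; exact: (congr1 (fun f => f k) HG).
have nN : #|TA|.+3 <= N.
  have mA : m <= #|TA| by have := leq_card a ia; rewrite card_ord.
  rewrite /N !card_sum cT card_ord.
  apply: (@leq_trans (#|TA| + #|TA| + (m + 1))); first lia.
  rewrite leq_add2l leq_add2l; apply/card_gt0P.
  by exists (Tagged (fun i : 'I_m => 'I_i.+1) (ord0 : 'I_(Ordinal m1).+1)).
have M3 := Mult_le nN MN.
have okG : gok eA eB a b d by split.
have okH : gok eA eA a a d by split.
apply: funext => k.
have := @mult_mapT _ _ _ _ _ _ (xcol eA eB a b #|TA|) (xcol eA eA a a #|TA|) M3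
  (fun z1 z2 E => Lall d1 okG okH E) (fun z1 z2 E => Lall d1 okH okH E) (Some k).
rewrite !card4 /=.
have SE : forall (K : Type) (x y : K), `[< Some x = Some y >] = `[< x = y >].
  by move=> K x y; apply/asboolP/asboolP => [[->]|->].
have NE : forall (T : finType), #|[set i : T | `[< @None (wlcol #|TA|) = Some k >]]| = 0.
  by move=> T; apply: set_empty => i /asboolP.
rewrite !NE !addn0.
have -> : #|[set p | `[< Some (wlC eA (pcol a) #|TA| p) = Some k >]]| = wlms eA (pcol a) #|TA| k.
  by apply: eq_card => p; rewrite !inE SE.
have -> : #|[set p | `[< Some (wlC eB (pcol b) #|TA| p) = Some k >]]| = wlms eB (pcol b) #|TA| k.
  by apply: eq_card => p; rewrite !inE SE.
by move/eqP; rewrite eqn_add2l => /eqP.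
Qed.

Theorem lemma6p3 (TA TB : finType) (eA : rel TA) (eB : rel TB)
  (n d lam mu m : nat) (a : 'I_m -> TA) (b : 'I_m -> TB) :
  srg eA n d lam mu -> srg eB n d lam mu ->
  injective a -> injective b ->
  (WL1 eA (pcol a) <> WL1 eB (pcol b) ->
     WL1 (gadj eA eB a b) (@nocol (gvert TA TB m)) <>
     WL1 (gadj eA eA a a) (@nocol (gvert TA TA m)))
  /\
  (forall r : nat, 1 <= r ->
     wlms eA (pcol a) r = wlms eB (pcol b) r ->
     omegams (gadj eA eB a b) r.-1 = omegams (gadj eA eA a a) r.-1).
Proof.
move=> sA sB ia ib; split.
  by move=> HW HG; apply: HW; exact: (part1_main sA sB ia ib HG).
move=> r r1 Hw.
have [xA cA] := srg_sx sA; have [xB cB] := srg_sx sB.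
apply: (@part2_gen _ eA _ a d lam mu r _ _ eB eA b a r1); split => //; split; first by rewrite cB cA.
by move=> k; rewrite /Mult; exact: (esym (congr1 (fun f => f k) Hw)).
Qed.
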